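(* Assume (A1)–(A4) and $\eta_x,\eta_z>0$ (see context). Then the iterates of the Jacobi scheme satisfy, for all $k\ge1$, $$\Delta\Phi^k\le-\eta_x\sum_{t=1}^T\Big(\|\Delta x_t^k\|^2_{A_t^\top A_t}+\|\Delta x_t^{k-1}\|^2_{A_t^\top A_t}\Big)-\eta_z\Big(\|\Delta z^k\|^2+\|\Delta z^{k-1}\|^2\Big).$$
   Context: Let $T\ge1$, $[T]=\{1,\dots,T\}$; for $t\in[T]$: $X_t\subseteq\mathbb{R}^{n_t}$, $f_t:\mathbb{R}^{n_t}\to\mathbb{R}$, $A_t\in\mathbb{R}^{m\times n_t}$; $b\in\mathbb{R}^m$; $X=\prod_tX_t$, $A=[A_1\cdots A_T]$, $Ax=\sum_tA_tx_t$, $A_{\neq t}x_{\neq t}=\sum_{s\neq t}A_sx_s$; $\|w\|_M=\sqrt{w^\top Mw}$. Assumptions: (A1) $X_t$ nonempty compact; (A2) $f_t$ is $C^2$; (A3) $A$ full row rank; (A4) $\{x\in X:Ax=b\}\neq\emptyset$. Parameters $\rho,\theta,\tau_x,\tau_z>0$ with $\eta_x:=\frac{\tau_x}{4}-\frac{(T-1)\rho}{2}>0$, $\eta_z:=\frac{\tau_z}{4}-\frac{2(\theta+\tau_z)^2}{\rho}>0$. $\mathcal{L}(x,z,\lambda)=\sum_tf_t(x_t)+\frac{\theta}{2}\|z\|^2+\lambda^\top(Ax+z-b)+\frac{\rho}{2}\|Ax+z-b\|^2$. Jacobi scheme: given $x^0\in X$, $z^0,\lambda^0\in\mathbb{R}^m$,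 for $k\ge1$: (i) for each $t$, $x_t^k$ is a local minimizer, computed by a solver warm-started at $x_t^{k-1}$ (so that its subproblem objective does not exceed that of $x_t^{k-1}$), of $\min_{x_t\in X_t}f_t(x_t)+(\lambda^{k-1})^\top A_tx_t+\frac{\rho}{2}\|A_tx_t+A_{\neq t}x^{k-1}_{\neq t}+z^{k-1}-b\|^2+\frac{\tau_x}{2}\|x_t-x_t^{k-1}\|^2_{A_t^\top A_t}$; (ii) $z^k=(\tau_zz^{k-1}-\rho(Ax^k-b)-\lambda^{k-1})/(\tau_z+\rho+\theta)$; (iii) $\lambda^k=\lambda^{k-1}+\rho(Ax^k+z^k-b)$. $\Phi(x,z,\lambda,\hat x,\hat z)=\mathcal{L}(x,z,\lambda)+\frac{\tau_z}{4}\|z-\hat z\|^2+\sum_t\frac{\tau_x}{4}\|x_t-\hat x_t\|^2_{A_t^\top A_t}$; $\Phi^k=\Phi(x^k,z^k,\lambda^k,x^{k-1},z^{k-1})$ for $k\ge1$. For $k\ge1$: $\Delta x^k=x^k-x^{k-1}$, $\Delta z^k=z^k-z^{k-1}$, $\Delta\Phi^k=\Phi^k-\Phi^{k-1}$. Also $\Delta z^0=-\tau_z^{-1}(\lambda^0+\theta z^0)$, $\Delta x^0=0$, $\Phi^0=\mathcal{L}(x^0,z^0,\lambda^0)+\frac{\tau_z}{4}\|\Delta z^0\|^2$. *)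

(* Defs.v *)
From HB Require Import structures.
From mathcomp Require Import all_boot all_order all_algebra.
From mathcomp Require Import all_classical all_reals all_analysis.
Set Implicit Arguments. Unset Strict Implicit. Unset Printing Implicit Defensive.
Import Order.TTheory GRing.Theory Num.Theory.
Import numFieldNormedType.Exports.
Local Open Scope classical_set_scope.
Local Open Scope ring_scope.

Section Defs.
Variable R : realType.

Definition sqn m (w : 'cV[R]_m) : R := (w^T *m w) 0 0.
Definition wsqn m (M : 'M[R]_m) (w : 'cV[R]_m) : R := (w^T *m M *m w) 0 0.

Definition ebase n (i : 'I_n) : 'cV[R]_n := delta_mx i 0.

Definition C2 n (f : 'cV[R]_n -> R) : Prop :=
  (forall i x, derivable f x (ebase i)) /\
  (forall i, continuous (fun x => 'D_(ebase i) f x)) /\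
  (forall i j x, derivable (fun y => 'D_(ebase i) f y) x (ebase j)) /\
  (forall i j, continuous (fun x => 'D_(ebase j) (fun y => 'D_(ebase i) f y) x)).

Variables (T m : nat) (n : 'I_T -> nat).

Definition Aop (A : forall t, 'M[R]_(m, n t)) (x : forall t, 'cV[R]_(n t)) : 'cV[R]_m :=
  \sum_(t < T) A t *m x t.

Definition Lag (f : forall t, 'cV[R]_(n t) -> R) (A : forall t, 'M[R]_(m, n t))
  (b : 'cV[R]_m) (rho theta : R) (x : forall t, 'cV[R]_(n t)) (z lam : 'cV[R]_m) : R :=
  \sum_(t < T) f t (x t) + theta / 2 * sqn z
  + (lam^T *m (Aop A x + z - b)) 0 0 + rho / 2 * sqn (Aop A x + z - b).

Definition PhiF (f : forall t, 'cV[R]_(n t) -> R) (A : forall t, 'M[R]_(m, n t))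
  (b : 'cV[R]_m) (rho theta taux tauz : R)
  (x : forall t, 'cV[R]_(n t)) (z lam : 'cV[R]_m)
  (xh : forall t, 'cV[R]_(n t)) (zh : 'cV[R]_m) : R :=
  Lag f A b rho theta x z lam + tauz / 4 * sqn (z - zh)
  + \sum_(t < T) taux / 4 * wsqn ((A t)^T *m A t) (x t - xh t).

(* the x_t-subproblem objective at iteration k (k >= 1), using iterate k-1 *)
Definition subobj (f : forall t, 'cV[R]_(n t) -> R) (A : forall t, 'M[R]_(m, n t))
  (b : 'cV[R]_m) (rho taux : R)
  (xp : forall t, 'cV[R]_(n t)) (zp lamp : 'cV[R]_m) (t : 'I_T) (y : 'cV[R]_(n t)) : R :=
  f t y + (lamp^T *m (A t *m y)) 0 0
  + rho / 2 * sqn (A t *m y + (\sum_(s < T | s != t) A s *m xp s) + zp - b)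
  + taux / 2 * wsqn ((A t)^T *m A t) (y - xp t).

Definition dz (theta tauz : R) (z lam : nat -> 'cV[R]_m) (k : nat) : 'cV[R]_m :=
  if k is k'.+1 then z k - z k' else - (tauz^-1 *: (lam 0%N + theta *: z 0%N)).

Definition dx (x : nat -> forall t, 'cV[R]_(n t)) (k : nat) (t : 'I_T) : 'cV[R]_(n t) :=
  if k is k'.+1 then x k t - x k' t else 0.

Definition Phi (f : forall t, 'cV[R]_(n t) -> R) (A : forall t, 'M[R]_(m, n t))
  (b : 'cV[R]_m) (rho theta taux tauz : R)
  (x : nat -> forall t, 'cV[R]_(n t)) (z lam : nat -> 'cV[R]_m) (k : nat) : R :=
  if k is k'.+1 then PhiF f A b rho theta taux tauz (x k) (z k) (lam k) (x k') (z k')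
  else Lag f A b rho theta (x 0%N) (z 0%N) (lam 0%N) + tauz / 4 * sqn (dz theta tauz z lam 0).

End Defs.

(* Main.v *)
Require Import Defs.
From HB Require Import structures.
From mathcomp Require Import all_boot all_order all_algebra.
From mathcomp Require Import all_classical all_reals all_analysis.
From mathcomp Require Import ring lra.
Import Order.TTheory GRing.Theory Num.Theory.
Import numFieldNormedType.Exports.
Local Open Scope classical_set_scope.
Local Open Scope ring_scope.
Set Implicit Arguments. Unset Strict Implicit. Unset Printing Implicit Defensive.

Section Dot.
Variables (R : realType) (m : nat).
Implicit Types u v w : 'cV[R]_m.
Definition dot (u v : 'cV[R]_m) : R := (u^T *m v) 0 0.

Lemma dotE u v : dot u v = \sum_i u i 0 * v i 0.
Proof. by rewrite /dot mxE; apply: eq_bigr => i _; rewrite mxE. Qed.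

Lemma sqnE u : sqn u = dot u u. Proof. by []. Qed.

Lemma dotC u v : dot u v = dot v u.
Proof. by rewrite !dotE; apply: eq_bigr => i _; rewrite mulrC. Qed.

Lemma dotDl u v w : dot (u + v) w = dot u w + dot v w.
Proof. by rewrite !dotE -big_split; apply: eq_bigr => i _; rewrite mxE mulrDl. Qed.

Lemma dotDr u v w : dot w (u + v) = dot w u + dot w v.
Proof. by rewrite dotC dotDl !(dotC w). Qed.

Lemma dotZl a u w : dot (a *: u) w = a * dot u w.
Proof. by rewrite !dotE mulr_sumr; apply: eq_bigr => i _; rewrite mxE mulrA. Qed.

Lemma dotZr a u w : dot w (a *: u) = a * dot w u.
Proof. by rewrite dotC dotZl dotC. Qed.

Lemma dotNl u w : dot (- u) w = - dot u w.
Proof. by rewrite -scaleN1r dotZl mulN1r. Qed.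

Lemma dotNr u w : dot w (- u) = - dot w u.
Proof. by rewrite dotC dotNl dotC. Qed.

Lemma dotBl u v w : dot (u - v) w = dot u w - dot v w.
Proof. by rewrite dotDl dotNl. Qed.

Lemma dotBr u v w : dot w (u - v) = dot w u - dot w v.
Proof. by rewrite dotDr dotNr. Qed.

Lemma dot0l w : dot 0 w = 0.
Proof. by rewrite dotE big1 // => i _; rewrite mxE mul0r. Qed.

Lemma dot_suml I (r : seq I) (P : pred I) (F : I -> 'cV[R]_m) w :
  dot (\sum_(i <- r | P i) F i) w = \sum_(i <- r | P i) dot (F i) w.
Proof.
elim/big_rec2: _ => [|i y1 y2 _ <-]; first by rewrite dot0l.
by rewrite dotDl.
Qed.

Lemma dot_sumr I (r : seq I) (P : pred I) (F : I -> 'cV[R]_m) w :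
  dot w (\sum_(i <- r | P i) F i) = \sum_(i <- r | P i) dot w (F i).
Proof. by rewrite dotC dot_suml; apply: eq_bigr => i _; rewrite dotC. Qed.

Lemma sqn_ge0 u : 0 <= sqn u.
Proof. rewrite sqnE dotE; apply: sumr_ge0 => i _; exact: sqr_ge0. Qed.

Lemma dot_le u v : 2 * dot u v <= sqn u + sqn v.
Proof.
have := sqn_ge0 (u - v); rewrite !sqnE !dotBl !dotBr (dotC v u). lra.
Qed.

Lemma sqn_sum_le T (g : 'I_T -> 'cV[R]_m) :
  sqn (\sum_t g t) <= T%:R * \sum_t sqn (g t).
Proof.
rewrite sqnE dot_suml.
under eq_bigr => t _ do rewrite dot_sumr.
have H : forall t s : 'I_T, dot (g t) (g s) <= (sqn (g t) + sqn (g s)) / 2.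
  move=> t s; have := dot_le (g t) (g s); lra.
apply: le_trans (ler_sum _ (fun t _ => ler_sum _ (fun s _ => H t s))) _.
set a := fun t => sqn (g t).
have E1 : forall t : 'I_T, \sum_(s < T) (a t + a s) / 2 = (T%:R * a t + \sum_s a s) / 2.
  move=> t; rewrite -mulr_suml big_split /= sumr_const card_ord mulr_natl //.
rewrite (eq_bigr _ (fun t _ => E1 t)) -mulr_suml big_split /= sumr_const card_ord -mulr_sumr.
rewrite mulr_natl; lra.
Qed.

Lemma wsqnE n0 (A : 'M[R]_(m, n0)) (w : 'cV[R]_n0) : wsqn (A^T *m A) w = sqn (A *m w).
Proof. by rewrite /wsqn /sqn trmx_mul !mulmxA. Qed.

Lemma dotdef u v : (u^T *m v) 0 0 = dot u v. Proof. by []. Qed.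

Lemma core_lag (F1 F0 rho theta tauz : R) (r U d z0 l0 : 'cV[R]_m) :
  theta *: (z0 + d) + l0 + rho *: (r + U + d) + tauz *: d = 0 ->
  (F1 + theta / 2 * sqn (z0 + d) + dot (l0 + rho *: (r + U + d)) (r + U + d)
      + rho / 2 * sqn (r + U + d))
  - (F0 + theta / 2 * sqn z0 + dot l0 r + rho / 2 * sqn r)
  = (F1 - F0) + dot l0 U + rho * dot r U + rho / 2 * sqn U
    - (theta + rho + 2 * tauz) / 2 * sqn d + rho * sqn (r + U + d).
Proof.
move=> g; have := congr1 (dot^~ d) g; rewrite /= dot0l => {g}.
rewrite !sqnE !(dotDl, dotDr, dotZl, dotZr).
rewrite ?(dotC U r) ?(dotC d r) ?(dotC z0 r) ?(dotC l0 r) ?(dotC d U)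
  ?(dotC z0 U) ?(dotC l0 U) ?(dotC z0 d) ?(dotC l0 d) ?(dotC l0 z0).
move=> h. lra.
Qed.

Lemma core_lam (rho theta tauz : R) (w d d' : 'cV[R]_m) :
  0 < rho -> rho *: w = - ((theta + tauz) *: d) + tauz *: d' ->
  rho * sqn w <= 2 * (theta + tauz) ^+ 2 / rho * sqn d + 2 * tauz ^+ 2 / rho * sqn d'.
Proof.
move=> hr h.
have e : rho * sqn w = sqn (rho *: w) / rho.
  rewrite !sqnE dotZl dotZr; field; lra.
rewrite e h.
set X := 2 * (theta + tauz) ^+ 2 * sqn d + 2 * tauz ^+ 2 * sqn d'.
have Q : sqn (- ((theta + tauz) *: d) + tauz *: d') <= X.
  have := sqn_ge0 ((theta + tauz) *: d + tauz *: d').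
  rewrite /X !sqnE !(dotDl, dotDr, dotZl, dotZr, dotNl, dotNr) (dotC d' d).
  have -> : 2 * (theta + tauz) ^+ 2 * dot d d = 2 * ((theta + tauz) * ((theta + tauz) * dot d d)) by ring.
  have -> : 2 * tauz ^+ 2 * dot d' d' = 2 * (tauz * (tauz * dot d' d')) by ring.
  lra.
have -> : 2 * (theta + tauz) ^+ 2 / rho * sqn d + 2 * tauz ^+ 2 / rho * sqn d' = X / rho by rewrite /X; ring.
apply: ler_wpM2r; [by rewrite invr_ge0 ltW | exact: Q].
Qed.

End Dot.

Lemma wsqn0 (R : realType) k (M : 'M[R]_k) : wsqn M 0 = 0.
Proof. by rewrite /wsqn mulmx0 mxE. Qed.

Lemma PhiE (R : realType) (T m : nat) (n : 'I_T -> nat)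
  (f : forall t : 'I_T, 'cV[R]_(n t) -> R)
  (A : forall t : 'I_T, 'M[R]_(m, n t)) (b : 'cV[R]_m)
  (rho theta taux tauz : R)
  (x : nat -> forall t : 'I_T, 'cV[R]_(n t)) (z lam : nat -> 'cV[R]_m) j :
  Phi f A b rho theta taux tauz x z lam j =
  Lag f A b rho theta (x j) (z j) (lam j) + tauz / 4 * sqn (dz theta tauz z lam j)
  + \sum_(t < T) taux / 4 * wsqn ((A t)^T *m A t) (dx x j t).
Proof.
case: j => [|j] //=.
by rewrite big1 ?addr0 // => t _; rewrite wsqn0 mulr0.
Qed.

Lemma lamE (R : realType) (T m : nat) (n : 'I_T -> nat)
  (A : forall t : 'I_T, 'M[R]_(m, n t)) (b : 'cV[R]_m)
  (rho theta tauz : R)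
  (x : nat -> forall t : 'I_T, 'cV[R]_(n t)) (z lam : nat -> 'cV[R]_m) :
  0 < rho -> 0 < theta -> 0 < tauz ->
  (forall k : nat, z k.+1 = (tauz + rho + theta)^-1 *:
       (tauz *: z k - rho *: (Aop A (x k.+1) - b) - lam k)) ->
  (forall k : nat, lam k.+1 = lam k + rho *: (Aop A (x k.+1) + z k.+1 - b)) ->
  forall j, lam j = - (theta *: z j) - tauz *: dz theta tauz z lam j.
Proof.
move=> hr ht htz hz hl [|j] /=.
  apply/matrixP => i k; rewrite !mxE; field; lra.
rewrite hl; apply/matrixP => i k.
have := congr1 (fun M : 'cV[R]_m => M i k) (hz j); rewrite /= !mxE => e.
rewrite e; field; lra.
Qed.

Section Vid.
Variables (R : realType) (m : nat).
Implicit Types a c e uu s : 'cV[R]_m.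
Lemma vid1 a uu (z1 z0 bb : 'cV[R]_m) : a + uu + z1 - bb = (a + z0 - bb) + uu + (z1 - z0).
Proof. by apply/matrixP => i k; rewrite !mxE; ring. Qed.
Lemma vid2 (a1 a0 s zz bb : 'cV[R]_m) : a1 + s + zz - bb = (a0 + s + zz - bb) + (a1 - a0).
Proof. by apply/matrixP => i k; rewrite !mxE; ring. Qed.
Lemma vid3 a c e (th tz rh : R) (w l1 : 'cV[R]_m) :
  l1 = a + rh *: w -> l1 = - (th *: c) - tz *: e -> th *: c + a + rh *: w + tz *: e = 0.
Proof.
move=> h1 h2; apply/matrixP => i k.
have := congr1 (fun M : 'cV[R]_m => M i k) h1.
have := congr1 (fun M : 'cV[R]_m => M i k) h2.
rewrite !mxE => e2 e1; lra.
Qed.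
Lemma vid4 (l0 l1 w z0 d d' : 'cV[R]_m) (th tz rh : R) :
  l1 = l0 + rh *: w -> l1 = - (th *: (z0 + d)) - tz *: d -> l0 = - (th *: z0) - tz *: d' ->
  rh *: w = - ((th + tz) *: d) + tz *: d'.
Proof.
move=> h1 h2 h3; apply/matrixP => i k.
have := congr1 (fun M : 'cV[R]_m => M i k) h1.
have := congr1 (fun M : 'cV[R]_m => M i k) h2.
have := congr1 (fun M : 'cV[R]_m => M i k) h3.
rewrite !mxE => e3 e2 e1.
have -> : rh * w i k = l1 i k - l0 i k by rewrite e1; ring.
rewrite e2 e3; ring.
Qed.
Lemma sqnD (u v : 'cV[R]_m) : sqn (u + v) = sqn u + 2 * dot u v + sqn v.
Proof. rewrite !sqnE !(dotDl, dotDr) (dotC v u); ring. Qed.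
End Vid.

Unset Implicit Arguments.
Theorem lemma2 (R : realType) (T m : nat) (n : 'I_T -> nat)
  (X : forall t : 'I_T, set 'cV[R]_(n t))
  (f : forall t : 'I_T, 'cV[R]_(n t) -> R)
  (A : forall t : 'I_T, 'M[R]_(m, n t)) (b : 'cV[R]_m)
  (rho theta taux tauz : R)
  (x : nat -> forall t : 'I_T, 'cV[R]_(n t)) (z lam : nat -> 'cV[R]_m) :
  (* (A1) *) (forall t, X t !=set0 /\ compact (X t)) ->
  (* (A2) *) (forall t, C2 (f t)) ->
  (* (A3) *) row_free (\mxrow_(t < T) A t) ->
  (* (A4) *) (exists xf : forall t : 'I_T, 'cV[R]_(n t),
                (forall t, X t (xf t)) /\ Aop A xf = b) ->
  0 < rho -> 0 < theta -> 0 < taux -> 0 < tauz ->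
  0 < taux / 4 - (T%:R - 1) * rho / 2 ->
  0 < tauz / 4 - 2 * (theta + tauz) ^+ 2 / rho ->
  (* initial point *)
  (forall t, X t (x 0%N t)) ->
  (* Jacobi scheme, k >= 1 *)
  (forall (k : nat) (t : 'I_T),
     let F := subobj f A b rho taux (x k) (z k) (lam k) (t:=t) in
     X t (x k.+1 t) /\
     (\forall y \near x k.+1 t, X t y -> F (x k.+1 t) <= F y) /\
     F (x k.+1 t) <= F (x k t)) ->
  (forall k : nat, z k.+1 = (tauz + rho + theta)^-1 *:
       (tauz *: z k - rho *: (Aop A (x k.+1) - b) - lam k)) ->
  (forall k : nat, lam k.+1 = lam k + rho *: (Aop A (x k.+1) + z k.+1 - b)) ->
  forall k : nat, (1 <= k)%N ->
    Phi f A b rho theta taux tauz x z lam k - Phi f A b rho theta taux tauz x z lam k.-1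
    <= - (taux / 4 - (T%:R - 1) * rho / 2) *
           \sum_(t < T) (wsqn ((A t)^T *m A t) (dx x k t)
                         + wsqn ((A t)^T *m A t) (dx x k.-1 t))
       - (tauz / 4 - 2 * (theta + tauz) ^+ 2 / rho) *
           (sqn (dz theta tauz z lam k) + sqn (dz theta tauz z lam k.-1)).
Proof.
move=> _ _ _ _ hrho hth htx htz hex hez _ hJ hz hl [//|j] _.
have hlam := lamE hrho hth htz hz hl.
rewrite /= !PhiE.
pose u := fun t => A t *m (x j.+1 t - x j t).
pose U := \sum_(t < T) u t.
pose r := Aop A (x j) + z j - b.
pose d := z j.+1 - z j.
pose d' := dz theta tauz z lam j.
pose Su := \sum_(t < T) sqn (u t).
pose Su' := \sum_(t < T) wsqn ((A t)^T *m A t) (dx x j t).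
have hU : Aop A (x j.+1) = Aop A (x j) + U.
  rewrite /U /u /Aop -big_split; apply: eq_bigr => t _ /=.
  by rewrite mulmxBr addrC subrK.
have hw : Aop A (x j.+1) + z j.+1 - b = r + U + d by rewrite hU (vid1 _ _ _ (z j)).
have hz1 : z j.+1 = z j + d by rewrite /d addrC subrK.
have hdesc : forall t, f t (x j.+1 t) - f t (x j t) + dot (lam j) (u t)
    + rho * dot r (u t) + (rho + taux) / 2 * sqn (u t) <= 0.
  move=> t; move: (hJ j t) => /= [_ [_ h]].
  rewrite /subobj !dotdef in h.
  have hS : Aop A (x j) = A t *m x j t + \sum_(s < T | s != t) A s *m x j s.
    by rewrite /Aop (bigD1 t).
  have e1 : A t *m x j.+1 t + \sum_(s < T | s != t) A s *m x j s + z j - b = r + u t.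
    by rewrite /r hS /u mulmxBr (vid2 _ (A t *m x j t)).
  have e0 : A t *m x j t + \sum_(s < T | s != t) A s *m x j s + z j - b = r.
    by rewrite /r hS.
  rewrite e1 e0 subrr wsqn0 wsqnE in h.
  have e2 : A t *m x j.+1 t = A t *m x j t + u t by rewrite /u mulmxBr addrC subrK.
  rewrite e2 dotDr sqnD in h.
  rewrite /u /= in h *.
  lra.
have hsum : (\sum_(t < T) f t (x j.+1 t) - \sum_(t < T) f t (x j t)) + dot (lam j) U
    + rho * dot r U + (rho + taux) / 2 * Su <= 0.
  have H0 : \sum_(t < T) (f t (x j.+1 t) - f t (x j t) + dot (lam j) (u t)
    + rho * dot r (u t) + (rho + taux) / 2 * sqn (u t)) <= 0.
    rewrite -oppr_ge0 -sumrN; apply: sumr_ge0 => t _; rewrite oppr_ge0; exact: hdesc.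
  apply: le_trans H0; rewrite le_eqVlt; apply/orP; left; apply/eqP.
  by rewrite /U /Su !dot_sumr !mulr_sumr !big_split /= sumrN.
rewrite /= /PhiF -/d -/d' big_split /= -/Su'.
have hS1 : \sum_(t < T) wsqn ((A t)^T *m A t) (x j.+1 t - x j t) = Su.
  by apply: eq_bigr => t _; rewrite wsqnE.
have hS2 : \sum_(t < T) taux / 4 * wsqn ((A t)^T *m A t) (x j.+1 t - x j t) = taux / 4 * Su.
  by rewrite -mulr_sumr hS1.
have hS3 : \sum_(t < T) taux / 4 * wsqn ((A t)^T *m A t) (dx x j t) = taux / 4 * Su'.
  by rewrite -mulr_sumr.
rewrite hS2 hS3 hS1.
have hl' : lam j.+1 = lam j + rho *: (r + U + d) by rewrite (hl j) hw.
have hlam1 : lam j.+1 = - (theta *: (z j + d)) - tauz *: d.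
  by rewrite (hlam j.+1) /= -/d -hz1.
have hlam0 : lam j = - (theta *: z j) - tauz *: d' by rewrite (hlam j).
rewrite /Lag !dotdef hl' hw -/r hz1.
have g := vid3 hl' hlam1.
have hc := @core_lag R m (\sum_(t < T) f t (x j.+1 t)) (\sum_(t < T) f t (x j t))
  rho theta tauz r U d (z j) (lam j) g.
have hlb := @core_lam R m rho theta tauz (r + U + d) d d' hrho (vid4 hl' hlam1 hlam0).
have hCS := sqn_sum_le u; rewrite -/U -/Su in hCS.
have hCS' : rho * sqn U <= rho * (T%:R * Su) by rewrite ler_wpM2l // ltW.
have hsd := sqn_ge0 d; have hsd' := sqn_ge0 d'.
have hF5 : 2 * tauz ^+ 2 / rho * sqn d' <= 2 * (theta + tauz) ^+ 2 / rho * sqn d'.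
  apply: ler_wpM2r => //; apply: ler_wpM2r; first by rewrite invr_ge0 ltW.
  apply: ler_wpM2l => //; rewrite -subr_ge0.
  have -> : (theta + tauz) ^+ 2 - tauz ^+ 2 = theta * (theta + 2 * tauz) by ring.
  apply: mulr_ge0; lra.
have hp1 : 0 <= (theta + rho) * sqn d by apply: mulr_ge0 => //; lra.
have hp2 : 0 <= tauz * sqn d by apply: mulr_ge0 => //; lra.
have hSu' : 0 <= Su' by apply: sumr_ge0 => t _; rewrite wsqnE sqn_ge0.
have hT : 0 <= (T%:R - 1) * rho * Su'.
  case: (posnP T) => [T0|Tpos].
    have -> : Su' = 0 by apply: big1 => t _; exfalso; have := ltn_ord t; move: (nat_of_ord t) => kk; by rewrite T0.
    by rewrite mulr0.
  apply: mulr_ge0 => //; apply: mulr_ge0; last exact: ltW.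
  by rewrite subr_ge0 ler1n.
lra.
Qed.
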